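(* Let $b\ge 2$ and $m\ge 0$ be integers. Consider the following nondeterministic procedure. Set $\mathcal U_1=[0,1)^2$. For $n=1,2,\ldots$: if $\mathcal U_n=\emptyset$, stop; otherwise choose an arbitrary box $X_n=\prod_{j=1}^2\left[\frac{u_j(n)}{b^m},\frac{u_j(n)+1}{b^m}\right)\subseteq \mathcal U_n$ with $u_j(n)\in\{0,1,\ldots,b^m-1\}$, and set $\mathcal U_{n+1}=\mathcal U_n\setminus\bigcup_{E\in\mathcal E_m(X_n)}E$. Then, regardless of the choices made, the procedure stops after exactly $b^m$ boxes have been chosen.
   Context: An elementary $b$-adic interval in $[0,1)^s$ is a set $\prod_{j=1}^s\left[\frac{a_j}{b^{d_j}},\frac{a_j+1}{b^{d_j}}\right)$ with $d_j\in\mathbb N_0$ and $a_j\in\{0,1,\ldots,b^{d_j}-1\}$; its volume is $b^{-(d_1+\cdots+d_s)}$. For a box $X=\prod_{j=1}^s\left[\frac{u_j}{b^m},\frac{u_j+1}{b^m}\right)$, $\mathcal E_m(X)$ denotes the set of all elementary $b$-adic intervals of volume $b^{-m}$ that contain $X$ as a subset. *)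

(* Defs.v *)
From HB Require Import structures.
From mathcomp Require Import all_boot all_order all_algebra.
From mathcomp Require Import boolp classical_sets reals.

Import Order.TTheory GRing.Theory Num.Theory.
Local Open Scope ring_scope.
Local Open Scope classical_set_scope.

Definition unit_square (R : realType) : set (R * R) :=
  [set p | (0 <= p.1 < 1) /\ (0 <= p.2 < 1)].

Definition elem_int (R : realType) (b d1 d2 a1 a2 : nat) : set (R * R) :=
  [set p | (a1%:R / (b%:R ^+ d1) <= p.1 < a1.+1%:R / (b%:R ^+ d1)) /\
           (a2%:R / (b%:R ^+ d2) <= p.2 < a2.+1%:R / (b%:R ^+ d2))].

Definition box (R : realType) (b m u1 u2 : nat) : set (R * R) :=
  elem_int R b m m u1 u2.

(* E_m(X): elementary b-adic intervals of volume b^{-m} (i.e. d1 + d2 = m)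
   containing X. *)
Definition Em (R : realType) (b m : nat) (X : set (R * R)) : set (set (R * R)) :=
  [set E | exists d1 d2 a1 a2 : nat,
      [/\ (a1 < b ^ d1)%N, (a2 < b ^ d2)%N, (d1 + d2)%N = m,
          E = elem_int R b d1 d2 a1 a2 & X `<=` E]].

(* The sets U_{n+1} of the procedure (0-indexed: Useq 0 = U_1), given the
   sequence of choices u n = (u_1(n+1), u_2(n+1)) of the box X_{n+1}. *)
Fixpoint Useq (R : realType) (b m : nat) (u : nat -> nat * nat) (n : nat)
  : set (R * R) :=
  match n with
  | 0 => unit_square R
  | n'.+1 => Useq R b m u n' `\`
             \bigcup_(E in Em R b m (box R b m (u n').1 (u n').2)) E
  end.

(* Main.v *)
Require Import Defs.
From HB Require Import structures.
From mathcomp Require Import all_boot all_order all_algebra.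
From mathcomp Require Import boolp classical_sets reals.
From mathcomp Require Import zify.
Import Order.TTheory GRing.Theory Num.Theory.

Definition conf (B m : nat) (c v : nat * nat) : Prop :=
  exists2 d, (d <= m)%N &
    (c.1 %/ B ^ (m - d) = v.1 %/ B ^ (m - d) /\ c.2 %/ B ^ d = v.2 %/ B ^ d).

Lemma notin_small (s : seq nat) B : (size s < B)%N ->
  exists a, (a < B)%N /\ a \notin s.
Proof.
move=> hs; case hh: (has (fun a => a \notin s) (iota 0 B)).
  case/hasP: hh => a; rewrite mem_iota /= => ha hn; exists a; split=> //.
have sub : {subset iota 0 B <= s}.
  move=> a ha; apply/negPn; apply/negP => hn.
  by move/negP: hh; apply; apply/hasP; exists a.
have := uniq_leq_size (iota_uniq 0 B) sub; rewrite size_iota => h.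
by move: hs; rewrite ltnNge h.
Qed.

Lemma divB_digit B n t : (0 < B)%N ->
  n %/ B ^ t = (n %/ B ^ t.+1) * B + (n %/ B ^ t) %% B.
Proof.
move=> hB; rewrite expnSr divnMA; exact: divn_eq.
Qed.

Lemma key_lemma B m k (u : nat -> nat * nat) y0 : (0 < B)%N ->
  (forall i, (i < k)%N -> ((u i).1 < B ^ m)%N) ->
  (forall i j, (i < k)%N -> (j < k)%N -> i <> j -> ~ conf B m (u i) (u j)) ->
  (forall i, (i < k)%N -> (u i).2 <> y0) ->
  exists x0, (x0 < B ^ m)%N /\ forall i, (i < k)%N -> ~ conf B m (x0, y0) (u i).
Proof.
move=> hB hx hinj hy.
pose Q t al := (al < B ^ t)%N /\ forall i d, (i < k)%N -> (d <= t)%N ->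
   ~ ((u i).1 %/ B ^ (m - d) = al %/ B ^ (t - d) /\ (u i).2 %/ B ^ d = y0 %/ B ^ d).
suff: forall t, (t <= m)%N -> exists al, Q t al.
  case/(_ m (leqnn m)) => al [hal HQ]; exists al; split => // i hi [d hd [h1 h2]].
  by apply: (HQ i d hi hd); split.
elim => [_|t IH htm].
  exists 0; split; first by rewrite expn0.
  move=> i d hi; rewrite leqn0 => /eqP -> [_]; rewrite !expn0 !divn1.
  exact: hy.
have [al [hal HQ]] := IH (ltnW htm).
pose T := [seq i <- iota 0 k | ((u i).1 %/ B ^ (m - t) == al) &&
                               ((u i).2 %/ B ^ t.+1 == y0 %/ B ^ t.+1)].
pose dy i := (u i).2 %/ B ^ t %% B.
pose dx i := (u i).1 %/ B ^ (m - t.+1) %% B.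
have inT i : (i \in T) = [&& (i < k)%N, ((u i).1 %/ B ^ (m - t) == al) &
                               ((u i).2 %/ B ^ t.+1 == y0 %/ B ^ t.+1)].
  by rewrite mem_filter mem_iota add0n /= andbC.
have uT : uniq (map dy T).
  rewrite map_inj_in_uniq ?filter_uniq ?iota_uniq //.
  move=> i j; rewrite !inT => /and3P [hi /eqP h1 /eqP h2] /and3P [hj /eqP h1' /eqP h2'] hd.
  case: (eqVneq i j) => // hij; exfalso.
  apply: (hinj i j hi hj); first by apply/eqP.
  exists t; first by apply: ltnW.
  split; first by rewrite h1 h1'.
  by rewrite (divB_digit B (u i).2 t hB) (divB_digit B (u j).2 t hB) h2 h2' -/(dy i) hd.
have sT : (size T < B)%N.
  have sub : {subset map dy T <= rem (y0 %/ B ^ t %% B) (iota 0 B)}.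
    move=> c /mapP [i]; rewrite inT => /and3P [hi /eqP h1 /eqP h2] ->.
    rewrite mem_rem_uniq ?iota_uniq // /dy.
    rewrite !inE mem_iota add0n ltn_mod hB leq0n andbT andbT.
    apply/negP => /eqP hc.
    apply: (HQ i t hi (leqnn t)); split; first by rewrite subnn expn0 divn1.
    by rewrite (divB_digit B (u i).2 t hB) (divB_digit B y0 t hB) h2 hc.
  have := uniq_leq_size uT sub.
  rewrite size_map size_rem ?size_iota; last by rewrite mem_iota add0n ltn_mod hB leq0n.
  by move=> h; apply: (leq_ltn_trans h); rewrite ltn_predL.
have := @notin_small (map dx T) B; rewrite size_map => /(_ sT) [a [ha hna]].
exists (al * B + a); split.
  rewrite expnSr; apply: leq_trans (_ : (al.+1 * B <= _)%N).
    by rewrite mulSn addnC ltn_add2r.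
  by rewrite leq_mul2r hal orbT.
move=> i d hi hd [h1 h2].
have hdiv : (al * B + a) %/ B = al by rewrite divnMDl // divn_small // addn0.
case: (ltnP d t.+1) => hdt.
  apply: (HQ i d hi hdt); split => //.
  rewrite h1; have -> : (t.+1 - d = (t - d).+1)%N by clear -hdt; lia.
  by rewrite expnS divnMA hdiv.
have edt : d = t.+1 by apply/eqP; rewrite eqn_leq hd hdt.
subst d; rewrite subnn expn0 divn1 in h1.
move/negP: hna; apply; apply/mapP; exists i.
  rewrite inT hi /= h2 eqxx andbT.
  have -> : (m - t = (m - t.+1).+1)%N by clear -htm; lia.
  by rewrite expnS mulnC divnMA h1 hdiv.
by rewrite /dx h1 modnMDl modn_small.
Qed.

Local Open Scope ring_scope.
Local Open Scope classical_set_scope.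

Lemma div_char (a N q : nat) : (0 < q)%N ->
  ((a == N %/ q) = ((a * q <= N) && (N < a.+1 * q)))%N.
Proof.
move=> hq; apply/idP/idP.
  move/eqP->; apply/andP; split; first exact: leq_divM.
  by rewrite -ltn_divLR // ltnS.
move/andP=> [h1 h2]; rewrite eqn_leq leq_divRL // h1 /=.
by rewrite -ltnS ltn_divLR.
Qed.

Section Real.
Variable R : realType.
Variables b m : nat.
Hypothesis hb : (2 <= b)%N.

Definition trc (x : R) : nat := Num.truncn (x * b%:R ^+ m).

Lemma bpos : (0 < b)%N. Proof. by apply: leq_trans hb. Qed.

Lemma memE (x : R) (a d : nat) : (d <= m)%N -> 0 <= x ->
  ((a%:R / (b%:R ^+ d) <= x < a.+1%:R / (b%:R ^+ d)) <-> a = (trc x %/ b ^ (m - d))%N).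
Proof.
move=> hd hx.
have hbR : 0 < b%:R :> R by rewrite ltr0n bpos.
have hbd : 0 < b%:R ^+ d :> R by rewrite exprn_gt0.
have hbq : 0 < b%:R ^+ (m - d) :> R by rewrite exprn_gt0.
have ebm : b%:R ^+ m = b%:R ^+ d * b%:R ^+ (m - d) :> R by rewrite -exprD subnKC.
have hxm : 0 <= x * b%:R ^+ m by rewrite mulr_ge0 // exprn_ge0 // ltW.
have hq : (0 < b ^ (m - d))%N by rewrite expn_gt0 bpos.
split.
  move=> /andP [h1 h2]; apply/eqP; rewrite div_char //; apply/andP; split.
    rewrite /trc truncn_ge_nat // natrM natrX ebm mulrA ler_pM2r //.
    by rewrite -ler_pdivrMr.
  rewrite /trc truncn_lt_nat // natrM natrX ebm mulrA ltr_pM2r //.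
  by rewrite -ltr_pdivlMr.
move/eqP; rewrite div_char // => /andP [h1 h2]; apply/andP; split.
  move: h1; rewrite /trc truncn_ge_nat // natrM natrX ebm mulrA ler_pM2r //.
  by rewrite -ler_pdivrMr.
move: h2; rewrite /trc truncn_lt_nat // natrM natrX ebm mulrA ltr_pM2r //.
by rewrite -ltr_pdivlMr.
Qed.

Lemma trc_box (x : R) (a : nat) : 0 <= x ->
  (a%:R / (b%:R ^+ m) <= x < a.+1%:R / (b%:R ^+ m)) <-> a = trc x.
Proof.
move=> hx; rewrite (memE _ _ _ (leqnn m) hx) subnn expn0 divn1 //.
Qed.

Lemma corner_in (a : nat) :
  (a%:R / (b%:R ^+ m) <= (a%:R / (b%:R ^+ m) : R) < a.+1%:R / (b%:R ^+ m)).
Proof.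
have hbR : 0 < b%:R :> R by rewrite ltr0n bpos.
rewrite lexx /= ltr_pM2r ?invr_gt0 ?exprn_gt0 // ltr_nat //.
Qed.

Lemma corner_ge0 (a d : nat) : 0 <= a%:R / (b%:R ^+ d) :> R.
Proof.
have hbR : 0 < b%:R :> R by rewrite ltr0n bpos.
by rewrite divr_ge0 // exprn_ge0 // ltW.
Qed.

Lemma union_mem (u1 u2 : nat) (p : R * R) :
  (u1 < b ^ m)%N -> (u2 < b ^ m)%N ->
  ((\bigcup_(E in Em R b m (box R b m u1 u2)) E) p <->
   (0 <= p.1 /\ 0 <= p.2 /\ conf b m (trc p.1, trc p.2) (u1, u2))).
Proof.
move=> hu1 hu2; split.
  case=> E [d1 [d2 [a1 [a2 [ha1 ha2 hd -> hsub]]]]] [/andP [h11 h12] /andP [h21 h22]].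
  have p1 : 0 <= p.1 by apply: le_trans h11; apply: corner_ge0.
  have p2 : 0 <= p.2 by apply: le_trans h21; apply: corner_ge0.
  have [c1 c2] := hsub ((u1%:R / b%:R ^+ m, u2%:R / b%:R ^+ m) : R * R)
     (conj (corner_in u1) (corner_in u2)).
  have hd1 : (d1 <= m)%N by rewrite -hd leq_addr.
  have hd2 : (d2 <= m)%N by rewrite -hd leq_addl.
  have e1 := proj1 (memE _ _ _ hd1 (corner_ge0 _ _)) c1.
  have e2 := proj1 (memE _ _ _ hd2 (corner_ge0 _ _)) c2.
  have f1 := proj1 (memE _ _ _ hd1 p1) (introT andP (conj h11 h12)).
  have f2 := proj1 (memE _ _ _ hd2 p2) (introT andP (conj h21 h22)).
  rewrite -(proj1 (trc_box _ _ (corner_ge0 _ _)) (corner_in u1)) in e1.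
  rewrite -(proj1 (trc_box _ _ (corner_ge0 _ _)) (corner_in u2)) in e2.
  have ed : (m - d2 = d1)%N by rewrite -hd addnK.
  rewrite ed in e2 f2.
  split=> //; split=> //; exists d1 => //=.
  by rewrite -f1 -e1 -f2 -e2.
move=> [p1 [p2 [d hd [e1 e2]]]].
have hbp := bpos.
exists (elem_int R b d (m - d) (u1 %/ b ^ (m - d)) (u2 %/ b ^ d)).
  exists d, (m - d)%N, (u1 %/ b ^ (m - d))%N, (u2 %/ b ^ d)%N; split => //.
  - by rewrite ltn_divLR ?expn_gt0 ?hbp // -expnD subnKC.
  - by rewrite ltn_divLR ?expn_gt0 ?hbp // -expnD subnK.
  - by rewrite subnKC.
  move=> q [q1 q2].
  have q10 : 0 <= q.1 by apply: le_trans (proj1 (andP q1)); apply: corner_ge0.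
  have q20 : 0 <= q.2 by apply: le_trans (proj1 (andP q2)); apply: corner_ge0.
  have g1 := proj1 (trc_box _ _ q10) q1.
  have g2 := proj1 (trc_box _ _ q20) q2.
  split; apply/(memE _ _ _ _ _).
  - exact: hd.
  - exact: q10.
  - by rewrite g1.
  - exact: leq_subr.
  - exact: q20.
  - by rewrite subKn // g2.
split; apply/(memE _ _ _ _ _).
- exact: hd.
- exact: p1.
- by rewrite e1.
- exact: leq_subr.
- exact: p2.
- by rewrite subKn // e2.
Qed.


Lemma conf_sym B n c v : conf B n c v -> conf B n v c.
Proof. by case=> d hd [h1 h2]; exists d. Qed.

Lemma trc_lt (x : R) : 0 <= x < 1 -> (trc x < b ^ m)%N.
Proof.
move=> /andP [h0 h1].
have hbR : 0 < b%:R :> R by rewrite ltr0n bpos.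
rewrite /trc truncn_lt_nat; last by rewrite mulr_ge0 // exprn_ge0 // ltW.
by rewrite natrX -[X in _ < X]mul1r ltr_pM2r // exprn_gt0.
Qed.

Lemma corner_sq (a : nat) : (a < b ^ m)%N ->
  0 <= (a%:R / b%:R ^+ m : R) < 1.
Proof.
move=> ha; have hbR : 0 < b%:R :> R by rewrite ltr0n bpos.
rewrite corner_ge0 /= ltr_pdivrMr ?exprn_gt0 // mul1r -natrX ltr_nat //.
Qed.

Lemma Useq_char (u : nat -> nat * nat) n (p : R * R) :
  (forall i, (i < n)%N -> ((u i).1 < b ^ m)%N /\ ((u i).2 < b ^ m)%N) ->
  (Useq R b m u n p <->
   (unit_square R p /\ forall i, (i < n)%N -> ~ conf b m (trc p.1, trc p.2) (u i))).
Proof.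
elim: n => [_|n IH hu] /=.
  by split; [move=> h; split | case].
have hu' : forall i, (i < n)%N -> ((u i).1 < b ^ m)%N /\ ((u i).2 < b ^ m)%N.
  by move=> i hi; apply: hu; apply: leqW.
have [hn1 hn2] := hu n (ltnSn n).
split.
  move=> [hU hnU]; have [hs hall] := (IH hu').1 hU; split=> // i.
  rewrite ltnS leq_eqVlt => /orP [/eqP -> | hi]; last exact: hall.
  move=> hc; apply: hnU; apply/(union_mem _ _ _ hn1 hn2).
  case: hs => /andP [h1 _] /andP [h2 _]; split=> //; split=> //.
move=> [hs hall]; split.
  by apply/(IH hu').2; split=> // i hi; apply: hall; apply: leqW.
move=> /(union_mem _ _ _ hn1 hn2) [_ [_ hc]].
by apply: (hall n (ltnSn n)).
Qed.

Lemma grid_prefix_x (u : nat -> nat * nat) i j :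
  ((u i).2 < b ^ m)%N -> ((u j).2 < b ^ m)%N -> (u i).1 = (u j).1 ->
  conf b m (u i) (u j).
Proof.
move=> h1 h2 e; exists m => //; rewrite subnn expn0 !divn1; split=> //.
by rewrite !divn_small.
Qed.

End Real.

Theorem mainTheorem5 (R : realType) (b m : nat) (hb : (2 <= b)%N)
  (u : nat -> nat * nat) (k : nat) :
  (forall n, (n < k)%N ->
     [/\ ((u n).1 < b ^ m)%N, ((u n).2 < b ^ m)%N &
         box R b m (u n).1 (u n).2 `<=` Useq R b m u n]) ->
  (Useq R b m u k = set0 <-> k = (b ^ m)%N).
Proof.
move=> H.
have hbp : (0 < b)%N by apply: leq_trans hb.
have hu : forall i, (i < k)%N -> ((u i).1 < b ^ m)%N /\ ((u i).2 < b ^ m)%N.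
  by move=> i hi; case: (H i hi).
have hfree : forall n i, (n < k)%N -> (i < n)%N -> ~ conf b m (u n) (u i).
  move=> n i hn hin.
  case: (H n hn) => h1 h2 hsub.
  have := hsub ((u n).1%:R / b%:R ^+ m, (u n).2%:R / b%:R ^+ m)
     (conj (corner_in R b m hb (u n).1) (corner_in R b m hb (u n).2)).
  move/(Useq_char R b m hb).
  case.
    by move=> j hj; apply: hu; apply: ltn_trans hj hn.
  move=> _ /(_ i hin).
  rewrite /= -(proj1 (trc_box R b m hb _ _ (corner_ge0 R b hb _ _)) (corner_in R b m hb (u n).1)).
  by rewrite -(proj1 (trc_box R b m hb _ _ (corner_ge0 R b hb _ _)) (corner_in R b m hb (u n).2)).
have hinj : forall i j, (i < k)%N -> (j < k)%N -> i <> j -> ~ conf b m (u i) (u j).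
  move=> i j hi hj hij; case: (ltngtP i j) => hl.
  - by move=> /conf_sym; apply: hfree.
  - by apply: hfree.
  - by [].
pose sx := map (fun i => (u i).1) (iota 0 k).
have usx : uniq sx.
  rewrite map_inj_in_uniq ?iota_uniq // => i j; rewrite !mem_iota !add0n /= => hi hj e.
  apply/eqP; apply/negP => /negP /eqP hij.
  apply: (hinj i j hi hj hij); apply: grid_prefix_x => //.
  + exact: (hu i hi).2.
  + exact: (hu j hj).2.
have ssx : {subset sx <= iota 0 (b ^ m)}.
  move=> x /mapP [i]; rewrite !mem_iota !add0n => hi ->; exact: (hu i hi).1.
have hk : (k <= b ^ m)%N.
  by have := uniq_leq_size usx ssx; rewrite size_map !size_iota.
split.
  move=> h0; apply/eqP; rewrite eqn_leq hk /= leqNgt; apply/negP => hlt.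
  pose sy := map (fun i => (u i).2) (iota 0 k).
  have hsy : (size sy < b ^ m)%N by rewrite size_map size_iota.
  have [y0 [hy0 hny]] := @notin_small sy (b ^ m) hsy.
  have hny' : forall i, (i < k)%N -> (u i).2 <> y0.
    move=> i hi e; move/negP: hny; apply; apply/mapP; exists i => //.
    by rewrite mem_iota add0n.
  have [x0 [hx0 hc]] := @key_lemma b m k u y0 hbp
     (fun i hi => (hu i hi).1) hinj hny'.
  have : Useq R b m u k (x0%:R / b%:R ^+ m, y0%:R / b%:R ^+ m).
    apply/(Useq_char R b m hb _ _ _ hu); split.
      by split; apply: corner_sq.
    move=> i hi /=.
    rewrite -(proj1 (trc_box R b m hb _ _ (corner_ge0 R b hb _ _)) (corner_in R b m hb x0)).
    rewrite -(proj1 (trc_box R b m hb _ _ (corner_ge0 R b hb _ _)) (corner_in R b m hb y0)).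
    exact: hc.
  by rewrite h0.
move=> ek; apply/seteqP; split=> // p hp.
have [[hp1 hp2] hall] := (Useq_char R b m hb _ _ _ hu).1 hp.
have hx := trc_lt R b m hb _ hp1.
have hy := trc_lt R b m hb _ hp2.
have hsz : (size (iota 0 (b ^ m)) <= size sx)%N by rewrite size_map !size_iota ek.
have [_ eqs] := uniq_min_size usx ssx hsz.
have : trc R b m p.1 \in sx by rewrite eqs mem_iota add0n.
move=> /mapP [i]; rewrite mem_iota add0n => hi e.
apply: (hall i hi); exists m => //=; rewrite subnn expn0 !divn1; split=> //.
by rewrite !divn_small //; exact: (hu i hi).2.
Qed.
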